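(* Let $\mathcal{G}$ be a hereditary graph family such that $\mathcal{G}_n\neq\emptyset$ for all $n$, let $r\geq 2$ and $0\leq \alpha \leq 1-\frac{1}{r}$. Suppose there is $n_1$ such that $\lambda_{\alpha}(\mathcal{G}_n)> \left(1-\frac{1}{r}\right)n-\left(1-\frac{1}{r}\right)$ for all $n\ge n_1$. Then the limit $$\pi_{\alpha}(\mathcal{G}):=\lim_{n\to \infty} \frac{\lambda_{\alpha}(\mathcal{G}_n)}{n}$$ exists, and $\pi_{\alpha}(\mathcal{G})\leq \frac{\lambda_{\alpha}(\mathcal{G}_n)}{n-1}$ for every $n\ge n_1$.
   Context: $\lambda_\alpha(G)$ is the largest eigenvalue of $A_\alpha(G)=\alpha D(G)+(1-\alpha)A(G)$ ($A$ adjacency matrix, $D$ diagonal degree matrix). A graph family is hereditary if it is closed under taking induced subgraphs. For a family $\mathcal{G}$, $\mathcal{G}_n$ is the set of $n$-vertex graphs in $\mathcal{G}$ and $\lambda_\alpha(\mathcal{G}_n)=\max_{G\in\mathcal{G}_n}\lambda_\alpha(G)$. *)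

(* Defs.v *)
From HB Require Import structures.
From mathcomp Require Import all_boot all_order all_algebra.
From mathcomp Require Import all_classical all_reals all_analysis.
Set Implicit Arguments. Unset Strict Implicit. Unset Printing Implicit Defensive.
Import Order.TTheory GRing.Theory Num.Theory.
Local Open Scope ring_scope.
Local Open Scope classical_set_scope.

Definition simple_graph (n : nat) (e : rel 'I_n) : Prop :=
  symmetric e /\ irreflexive e.

Definition graph_family := forall n : nat, rel 'I_n -> Prop.

Definition induced (m n : nat) (e : rel 'I_n) (f : 'I_m -> 'I_n) : rel 'I_m :=
  fun i j => e (f i) (f j).

Definition fam_n (F : graph_family) (n : nat) (e : rel 'I_n) : Prop :=
  simple_graph e /\ F n e.

(* Hereditary: closed under induced subgraphs (an injection 'I_m -> 'I_n
   selects the vertex subset, which also gives closure under relabelling). *)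
Definition hereditary (F : graph_family) : Prop :=
  forall (m n : nat) (f : 'I_m -> 'I_n) (e : rel 'I_n),
    injective f -> fam_n F e -> fam_n F (induced e f).

Definition deg (n : nat) (e : rel 'I_n) (i : 'I_n) : nat := #|[set j | e i j]|.

Definition Aalpha (R : realType) (alpha : R) (n : nat) (e : rel 'I_n) : 'M[R]_n :=
  \matrix_(i, j) (alpha * (i == j)%:R * (deg e i)%:R + (1 - alpha) * (e i j)%:R).

Definition lambda_alpha (R : realType) (alpha : R) (n : nat) (e : rel 'I_n) : R :=
  sup [set l : R | eigenvalue (Aalpha alpha e) l].

Definition lambda_fam (R : realType) (alpha : R) (F : graph_family) (n : nat) : R :=
  sup [set lambda_alpha alpha e | e in [set e : rel 'I_n | fam_n F e]].

(* Main.v *)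
Require Import Defs.
From HB Require Import structures.
From mathcomp Require Import all_boot all_order all_algebra.
From mathcomp Require Import all_classical all_reals all_analysis.
From mathcomp Require Import lra.
Set Implicit Arguments. Unset Strict Implicit. Unset Printing Implicit Defensive.
Import Order.TTheory GRing.Theory Num.Theory.
Import numFieldNormedType.Exports.
Local Open Scope ring_scope.
Local Open Scope classical_set_scope.
Section Spec.
Variable R : realType.

Definition bl n (A : 'M[R]_n) (y z : 'rV[R]_n) : R :=
  \sum_i \sum_j y 0 i * A i j * z 0 j.
Definition nrm n (y : 'rV[R]_n) : R := \sum_i y 0 i ^+ 2.

Lemma nrm_ge0 n (y : 'rV[R]_n) : 0 <= nrm y.
Proof. by apply: sumr_ge0 => i _; exact: sqr_ge0. Qed.

Lemma nrm_eq0 n (y : 'rV[R]_n) : nrm y = 0 -> y = 0.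
Proof.
move=> /eqP; rewrite psumr_eq0 => [/allP H|i _]; last exact: sqr_ge0.
apply/rowP => i; rewrite !mxE.
have := H i (mem_index_enum i) => /implyP /(_ isT).
by rewrite sqrf_eq0 => /eqP ->.
Qed.

Lemma coord_le_nrm n (y : 'rV[R]_n) i : y 0 i ^+ 2 <= nrm y.
Proof.
rewrite /nrm (bigD1 i) //= lerDl; apply: sumr_ge0 => j _; exact: sqr_ge0.
Qed.

Lemma blZ n (A : 'M[R]_n) c y : bl A (c *: y) (c *: y) = c ^+ 2 * bl A y y.
Proof.
rewrite /bl mulr_sumr; apply: eq_bigr => i _; rewrite mulr_sumr.
by apply: eq_bigr => j _; rewrite !mxE; lra.
Qed.

Lemma nrmZ n c (y : 'rV[R]_n) : nrm (c *: y) = c ^+ 2 * nrm y.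
Proof. by rewrite /nrm mulr_sumr; apply: eq_bigr => i _; rewrite !mxE; lra. Qed.

Lemma bl0 n (A : 'M[R]_n) : bl A 0 0 = 0.
Proof. by rewrite -(scale0r 0) blZ expr2 !mul0r. Qed.

Lemma bl_sym n (A : 'M[R]_n) y z : (forall i j, A i j = A j i) ->
  bl A y z = bl A z y.
Proof.
move=> sA; rewrite /bl exchange_big; apply: eq_bigr => i _; apply: eq_bigr => j _.
by rewrite sA; lra.
Qed.

Lemma bl_expand n (A : 'M[R]_n) x y t :
  bl A (x + t *: y) (x + t *: y) =
  bl A x x + t * (bl A x y + bl A y x) + t ^+ 2 * bl A y y.
Proof.
rewrite /bl mulrDr !mulr_sumr -!big_split /=; apply: eq_bigr => i _.
rewrite !mulr_sumr -!big_split /=; apply: eq_bigr => j _.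
by rewrite !mxE; lra.
Qed.

Lemma bl_mulmx n (A : 'M[R]_n) v z : bl A v z = \sum_j (v *m A) 0 j * z 0 j.
Proof.
rewrite /bl exchange_big; apply: eq_bigr => j _; rewrite mxE mulr_suml.
by apply: eq_bigr.
Qed.

Lemma bl_subscal n (A : 'M[R]_n) mu y :
  bl (A - mu%:M) y y = bl A y y - mu * nrm y.
Proof.
rewrite /bl /nrm mulr_sumr -sumrB; apply: eq_bigr => i _.
rewrite (bigD1 i) //= [in RHS](bigD1 i) //=.
have -> : \sum_(j | j != i) y 0 i * (A - mu%:M) i j * y 0 j =
   \sum_(j | j != i) y 0 i * A i j * y 0 j.
  by apply: eq_bigr => j ji; rewrite !mxE eq_sym (negbTE ji) mulr0n subr0.
rewrite !mxE eqxx mulr1n; lra.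
Qed.


Lemma var_eig n (B : 'M[R]_n) x : (forall i j, B i j = B j i) ->
  (forall y, bl B y y <= 0) -> bl B x x = 0 -> x *m B = 0.
Proof.
move=> sB neg x0.
have hxu : bl B x (x *m B) = nrm (x *m B).
  by rewrite bl_mulmx /nrm; apply: eq_bigr => j _; rewrite expr2.
have hux : bl B (x *m B) x = nrm (x *m B) by rewrite bl_sym.
move: hxu hux (@nrm_eq0 _ (x *m B)).
move: (x *m B) => u hxu hux bu.
move: (nrm u) hxu hux bu (nrm_ge0 u) => b hxu hux bu b0.
apply: bu.
have := neg (x + (b / (1 - bl B u u)) *: u).
rewrite bl_expand x0 hxu hux.
move: (bl B u u) (neg u) => c c0.
have kp : 0 < 1 - c by lra.
have tk : b = (b / (1 - c)) * (1 - c) by rewrite divfK // gt_eqF.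
move: (b / (1 - c)) tk => t tk H.
have H2 : (0 + t * (b + b) + t ^+ 2 * c) * (1 - c) ^+ 2 <= 0.
  apply: mulr_le0_ge0 => //; nra.
rewrite tk in H2.
have H3 : (t * (1 - c)) ^+ 2 * (2 - c) <= 0 by lra.
rewrite -tk in H3.
nra.
Qed.

Lemma cont_sum (T : topologicalType) (I : finType) (F : I -> T -> R) :
  (forall i, continuous (F i)) -> continuous (fun v => \sum_i F i v).
Proof.
move=> h.
have H : forall s : seq I, continuous (fun v => \sum_(i <- s) F i v).
  elim => [|a s IH].
    rewrite (_ : (fun v => \sum_(i <- [::]) F i v) = fun=> 0); last first.
      by apply: funext => v; rewrite big_nil.
    exact: cst_continuous.
  rewrite (_ : (fun v => \sum_(i <- a :: s) F i v) =
     (F a + (fun v => \sum_(i <- s) F i v))); last first.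
    by apply: funext => v; rewrite big_cons.
  move=> x; exact: (continuousD (h a x) (IH x)).
exact: H.
Qed.

Lemma nrm_cont n : continuous (@nrm n).
Proof.
apply: (@cont_sum _ _ (fun i (v : 'rV[R]_n) => v 0 i ^+ 2)) => i.
rewrite (_ : (fun v : 'rV[R]_n => v 0 i ^+ 2) =
   ((fun v : 'rV[R]_n => v 0 i) \* (fun v : 'rV[R]_n => v 0 i))); last first.
  by apply: funext => v; rewrite /= expr2.
move=> x; apply: continuousM; exact: coord_continuous.
Qed.

Lemma bl_cont n (A : 'M[R]_n) : continuous (fun v => bl A v v).
Proof.
apply: (@cont_sum _ _ (fun i (v : 'rV[R]_n) => \sum_j v 0 i * A i j * v 0 j)) => i.
apply: (@cont_sum _ _ (fun j (v : 'rV[R]_n) => v 0 i * A i j * v 0 j)) => j.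
rewrite (_ : (fun v : 'rV[R]_n => v 0 i * A i j * v 0 j) =
   (((fun v : 'rV[R]_n => v 0 i) \* (fun=> A i j)) \* (fun v : 'rV[R]_n => v 0 j))); last first.
  by apply: funext => v.
move=> x; apply: continuousM; last exact: coord_continuous.
apply: continuousM; [exact: coord_continuous | exact: cst_continuous].
Qed.

Lemma sphere_compact n : compact [set v : 'rV[R]_n | nrm v = 1].
Proof.
apply: bounded_closed_compact.
  exists 1; split; first by rewrite num_real.
  move=> r r1 v /= nv.
  rewrite [leLHS]/Num.norm /= mx_normrE; apply: bigmax_le; first lra.
  move=> [i j] _ /=; rewrite [i]ord1.
  have := coord_le_nrm v j; rewrite nv => h.
  have : `|v 0 j| ^+ 2 <= 1 by rewrite real_normK ?num_real.
  have := normr_ge0 (v 0 j); move: `|v 0 j| => a a0 ha. nra.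
have -> : [set v : 'rV[R]_n | nrm v = 1] = (@nrm n) @^-1` [set x | x = 1] by [].
apply: preimage_closed; last exact: closed_eq.
move=> v _; exact: nrm_cont.
Qed.


Lemma spectral n (A : 'M[R]_n) : (0 < n)%N -> (forall i j, A i j = A j i) ->
  exists x : 'rV[R]_n, [/\ nrm x = 1,
    (forall y, bl A y y <= bl A x x * nrm y) &
    sup [set l | eigenvalue A l] = bl A x x].
Proof.
move=> n0 sA.
pose S := [set v : 'rV[R]_n | nrm v = 1].
have S0 : S !=set0.
  exists (\row_j ((j == Ordinal n0)%:R : R)).
  rewrite /S /= /nrm (bigD1 (Ordinal n0)) //= big1 => [|j jn].
    by rewrite mxE eqxx expr1n addr0.
  by rewrite mxE (negbTE jn) expr2 mul0r.
have [x xS xmax] := EVT_max_rV S0 (@sphere_compact n)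
   (continuous_subspaceT (@bl_cont n A)).
rewrite inE /S /= in xS.
have maxall : forall y, bl A y y <= bl A x x * nrm y.
  move=> y; have [ny0|ny0] := eqVneq (nrm y) 0.
    by rewrite ny0 mulr0 (nrm_eq0 ny0) bl0.
  have ny : 0 < nrm y by rewrite lt_def ny0 nrm_ge0.
  have sp : 0 < Num.sqrt (nrm y) by rewrite sqrtr_gt0.
  have := xmax ((Num.sqrt (nrm y))^-1 *: y).
  rewrite !inE /S /= nrmZ blZ exprVn sqr_sqrtr ?nrm_ge0 // mulVf //.
  by move=> /(_ erefl) h; rewrite -ler_pdivrMr // mulrC.
have eig : x *m A = bl A x x *: x.
  have := @var_eig n (A - (bl A x x)%:M) x.
  have -> : x *m (A - (bl A x x)%:M) = x *m A - bl A x x *: x.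
    by rewrite mulmxBr mul_mx_scalar.
  move=> h; apply/eqP; rewrite -subr_eq0; apply/eqP; apply: h.
  - by move=> i j; rewrite !mxE sA eq_sym.
  - by move=> y; rewrite bl_subscal subr_le0.
  - by rewrite bl_subscal xS mulr1 subrr.
have xn0 : x != 0.
  apply/eqP => x0; move: xS; rewrite x0 /nrm big1 => [|i _]; last first.
    by rewrite mxE expr2 mul0r.
  by move/eqP; rewrite eq_sym oner_eq0.
have ub : ubound [set l | eigenvalue A l] (bl A x x).
  move=> l /eigenvalueP [v vA vn0].
  have nv : 0 < nrm v.
    rewrite lt_def nrm_ge0 andbT; apply/eqP => /nrm_eq0 v0.
    by move: vn0; rewrite v0 eqxx.
  have := maxall v; rewrite bl_mulmx vA.
  have -> : \sum_j (l *: v) 0 j * v 0 j = l * nrm v.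
    by rewrite /nrm mulr_sumr; apply: eq_bigr => j _; rewrite mxE expr2 mulrA.
  by rewrite ler_pM2r.
have inS : [set l | eigenvalue A l] (bl A x x) by apply/eigenvalueP; exists x.
exists x; split => //; apply/le_anti/andP; split.
  by apply: ge_sup => //; exists (bl A x x).
by apply: sup_upper_bound => //; split; [exists (bl A x x) | exists (bl A x x)].
Qed.

End Spec.

Section Graph.
Variable R : realType.
Variable alpha : R.

Lemma deg_sum n (e : rel 'I_n) i : (deg e i)%:R = \sum_j ((e i j)%:R : R).
Proof.
rewrite /deg -sum1_card natr_sum big_mkcond /=.
by apply: eq_bigr => j _; rewrite unfold_in /= asboolb; case: (e i j).
Qed.

Lemma Aalpha_sym n (e : rel 'I_n) : symmetric e ->
  forall i j, Aalpha alpha e i j = Aalpha alpha e j i.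
Proof.
move=> se i j; rewrite !mxE; have [->|ij] := eqVneq i j => //.
by rewrite se /= !mulr0 !mul0r.
Qed.

Definition Tgr n (e : rel 'I_n) (x : 'rV[R]_n) i j : R :=
  (e i j)%:R * (alpha * x 0 i ^+ 2 + (1 - alpha) * (x 0 i * x 0 j)).

Lemma bl_graph n (e : rel 'I_n) x :
  bl (Aalpha alpha e) x x = \sum_i \sum_j Tgr e x i j.
Proof.
rewrite /bl; apply: eq_bigr => i _.
have -> : \sum_j x 0 i * Aalpha alpha e i j * x 0 j =
   alpha * (deg e i)%:R * x 0 i ^+ 2 +
   \sum_j (1 - alpha) * (e i j)%:R * (x 0 i * x 0 j).
  rewrite (bigD1 i) //= [X in _ = _ + X](bigD1 i) //=.
  have -> : \sum_(j | j != i) x 0 i * Aalpha alpha e i j * x 0 j =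
     \sum_(j | j != i) (1 - alpha) * (e i j)%:R * (x 0 i * x 0 j).
    apply: eq_bigr => j ji; rewrite mxE eq_sym (negbTE ji) /=.
    rewrite mulr0 mul0r add0r; lra.
  rewrite mxE eqxx /= mulr1; lra.
rewrite deg_sum /Tgr mulr_sumr mulr_suml -big_split /=.
by apply: eq_bigr => j _; lra.
Qed.

Lemma sum_lift m (F : 'I_m.+1 -> R) (w : 'I_m.+1) :
  \sum_(k < m) F (lift w k) = \sum_i F i - F w.
Proof. by rewrite [in RHS](bigD1_ord w) //= addrC addrK. Qed.

Lemma Tg_induced m (e : rel 'I_m.+1) (x : 'rV[R]_m.+1) (w : 'I_m.+1) (k l : 'I_m) :
  Tgr (Defs.induced e (lift w)) (\row_k0 x 0 (lift w k0)) k l =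
  Tgr e x (lift w k) (lift w l).
Proof. by rewrite /Tgr !mxE. Qed.

Lemma induced_bl m (e : rel 'I_m.+1) (x : 'rV[R]_m.+1) (w : 'I_m.+1) :
  bl (Aalpha alpha (Defs.induced e (lift w))) (\row_k x 0 (lift w k))
     (\row_k x 0 (lift w k)) =
  \sum_i \sum_j Tgr e x i j - \sum_i Tgr e x i w - \sum_j Tgr e x w j + Tgr e x w w.
Proof.
rewrite bl_graph.
under eq_bigr => k _ do under eq_bigr => l _ do rewrite Tg_induced.
under eq_bigr => k _ do rewrite (sum_lift (Tgr e x (lift w k))).
rewrite (sum_lift (fun i => \sum_j Tgr e x i j - Tgr e x i w)) /= sumrB.
lra.
Qed.

Lemma nrm_induced m (x : 'rV[R]_m.+1) (w : 'I_m.+1) :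
  nrm (\row_k x 0 (lift w k)) = nrm x - x 0 w ^+ 2.
Proof.
rewrite /nrm; under eq_bigr => k _ do rewrite mxE.
by rewrite (sum_lift (fun i => x 0 i ^+ 2)).
Qed.

Lemma sum_over_w m (e : rel 'I_m.+1) (x : 'rV[R]_m.+1) : irreflexive e ->
  \sum_w bl (Aalpha alpha (Defs.induced e (lift w))) (\row_k x 0 (lift w k))
     (\row_k x 0 (lift w k)) = (m%:R - 1) * \sum_i \sum_j Tgr e x i j.
Proof.
move=> irr; under eq_bigr => w _ do rewrite induced_bl.
rewrite !big_split /= !sumrN sumr_const card_ord.
rewrite [\sum_(i < m.+1) \sum_(i0 < m.+1) Tgr e x i0 i]exchange_big /=.
rewrite [\sum_(i < m.+1) Tgr e x i i]big1; last by move=> i _; rewrite /Tgr irr mul0r.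
rewrite mulrSr -mulr_natl; lra.
Qed.

Lemma sum_nrm_w m (x : 'rV[R]_m.+1) :
  \sum_w nrm (\row_k x 0 (lift w k)) = m%:R * nrm x.
Proof.
under eq_bigr => w _ do rewrite nrm_induced.
rewrite sumrB sumr_const card_ord mulrSr -mulr_natl /nrm; lra.
Qed.


Lemma step m (e : rel 'I_m.+1) L : (0 < m)%N -> simple_graph e ->
  (forall w, lambda_alpha alpha (Defs.induced e (lift w)) <= L) ->
  (m%:R - 1) * lambda_alpha alpha e <= m%:R * L.
Proof.
move=> m0 [se ie] hL.
have [x [nx _ lx]] := spectral (ltn0Sn m) (Aalpha_sym se).
rewrite /lambda_alpha lx bl_graph -sum_over_w //.
have hw : forall w : 'I_m.+1,
    bl (Aalpha alpha (Defs.induced e (lift w))) (\row_k x 0 (lift w k))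
      (\row_k x 0 (lift w k)) <= L * nrm (\row_k x 0 (lift w k)).
  move=> w.
  have sw : symmetric (Defs.induced e (lift w)).
    by move=> a b; rewrite /Defs.induced se.
  have [y [_ ymax ly]] := spectral m0 (Aalpha_sym sw).
  have := hL w; rewrite /lambda_alpha ly => yL.
  apply: le_trans (ymax _) _; apply: ler_wpM2r; [exact: nrm_ge0 | exact: yL].
apply: le_trans (ler_sum _ (fun w _ => hw w)) _.
by rewrite -mulr_sumr sum_nrm_w nx mulr1 mulrC.
Qed.

Lemma lambda_bounds n (e : rel 'I_n) : (0 < n)%N -> simple_graph e ->
  0 <= alpha -> alpha <= 1 ->
  0 <= lambda_alpha alpha e <= n%:R ^+ 2.
Proof.
move=> n0 [se ie] a0 a1.
have [x [nx xmax lx]] := spectral n0 (Aalpha_sym se).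
rewrite /lambda_alpha lx; apply/andP; split.
  have := xmax (const_mx 1).
  have -> : nrm (const_mx 1 : 'rV[R]_n) = n%:R.
    by rewrite /nrm (eq_bigr (fun=> 1)) ?sumr_const ?card_ord // => i _; rewrite mxE expr1n.
  have : 0 <= bl (Aalpha alpha e) (const_mx 1) (const_mx 1).
    rewrite bl_graph; apply: sumr_ge0 => i _; apply: sumr_ge0 => j _.
    rewrite /Tgr !mxE expr1n mulr1; case: (e i j) => /=; lra.
  move=> h1 h2; have h3 := le_trans h1 h2.
  by move: h3; rewrite pmulr_lge0 // ltr0n.
rewrite bl_graph.
have -> : n%:R ^+ 2 = \sum_(i < n) \sum_(j < n) (1 : R).
  under eq_bigr => i _ do rewrite sumr_const card_ord.
  by rewrite sumr_const card_ord expr2 mulr_natr.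
apply: ler_sum => i _; apply: ler_sum => j _.
have := coord_le_nrm x i; have := coord_le_nrm x j; rewrite nx /Tgr => hj hi.
move: (x 0 i) (x 0 j) hi hj => a b hi hj.
have h1 : alpha * a ^+ 2 <= alpha by nra.
have h2 : a * b <= 1 by nra.
have h3 : (1 - alpha) * (a * b) <= 1 - alpha by nra.
case: (e i j) => /=; lra.
Qed.

Lemma lambda_one (e : rel 'I_1) : simple_graph e -> lambda_alpha alpha e <= 0.
Proof.
move=> [se ie].
have [x [nx xmax lx]] := spectral (ltn0Sn 0) (Aalpha_sym se).
rewrite /lambda_alpha lx bl_graph big1 // => i _; rewrite big1 // => j _.
by rewrite /Tgr (ord1 i) (ord1 j) ie mul0r.
Qed.

End Graph.

Section Fam.
Variable R : realType.
Variable alpha : R.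
Variable F : graph_family.
Hypothesis a0 : 0 <= alpha.
Hypothesis a1 : alpha <= 1.

Lemma le_fam n (e : rel 'I_n) : (0 < n)%N -> fam_n F e ->
  lambda_alpha alpha e <= lambda_fam alpha F n.
Proof.
move=> n0 fe; rewrite /lambda_fam; apply: sup_upper_bound; last by exists e.
split; first by exists (lambda_alpha alpha e); exists e.
exists (n%:R ^+ 2) => _ [e' fe' <-].
by have /andP[] := lambda_bounds n0 fe'.1 a0 a1.
Qed.

Lemma fam_le n L : (exists e : rel 'I_n, fam_n F e) ->
  (forall e : rel 'I_n, fam_n F e -> lambda_alpha alpha e <= L) ->
  lambda_fam alpha F n <= L.
Proof.
move=> [e fe] h; rewrite /lambda_fam; apply: ge_sup.
  by exists (lambda_alpha alpha e); exists e.
by move=> _ [e' fe' <-]; exact: h.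
Qed.

Lemma fam_ge0 n : (0 < n)%N -> (exists e : rel 'I_n, fam_n F e) ->
  0 <= lambda_fam alpha F n.
Proof.
move=> n0 [e fe]; apply: le_trans (le_fam n0 fe).
by have /andP[] := lambda_bounds n0 fe.1 a0 a1.
Qed.

Lemma fam_step m : (1 < m)%N -> hereditary F ->
  (forall n, exists e : rel 'I_n, fam_n F e) ->
  (m%:R - 1) * lambda_fam alpha F m.+1 <= m%:R * lambda_fam alpha F m.
Proof.
move=> m1 her ne.
have mp : 0 < m%:R - 1 :> R by rewrite subr_gt0 ltr1n.
rewrite mulrC -ler_pdivlMr //; apply: fam_le => // e fe.
rewrite ler_pdivlMr // mulrC; apply: step => //; first exact: ltnW.
  exact: fe.1.
move=> w; apply: le_fam; first exact: ltnW.
exact: her (@lift_inj _ w) fe.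
Qed.

End Fam.

Unset Implicit Arguments.

Theorem lemma3p4 (R : realType) (F : graph_family) (r : nat) (alpha : R) (n1 : nat) :
  hereditary F ->
  (forall n : nat, exists e : rel 'I_n, fam_n F e) ->
  (2 <= r)%N ->
  0 <= alpha -> alpha <= 1 - r%:R^-1 ->
  (forall n : nat, (n1 <= n)%N -> (0 < n)%N ->
     lambda_fam alpha F n > (1 - r%:R^-1) * n%:R - (1 - r%:R^-1)) ->
  exists piG : R,
    ((fun n : nat => lambda_fam alpha F n / n%:R) @ \oo --> piG) /\
    (forall n : nat, (n1 <= n)%N -> (0 < n)%N ->
       piG <= lambda_fam alpha F n / (n%:R - 1)).
Proof.
move=> her ne r2 a0 ar hyp.
have a1 : alpha <= 1.
  have : 0 <= r%:R^-1 :> R by rewrite invr_ge0 ler0n.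
  lra.
have n12 : (2 <= n1)%N.
  rewrite leqNgt; apply/negP => n1l.
  have h0 : (n1 <= 1)%N by rewrite -ltnS.
  have := hyp 1%N h0 isT; rewrite mulr1 subrr.
  have : lambda_fam alpha F 1 <= 0.
    apply: fam_le => // e fe; exact: lambda_one fe.1.
  by move=> h1 h2; move: (le_lt_trans h1 h2); rewrite ltxx.
pose a k := lambda_fam alpha F k.+2 / (k.+1)%:R.
have anoninc : {homo a : n m / (n <= m)%N >-> m <= n}.
  apply/nonincreasing_seqP => k; rewrite /a.
  have st := fam_step a0 a1 (isT : (1 < k.+2)%N) her ne.
  have e1 : (k.+2)%:R = (k.+1)%:R + 1 :> R by rewrite -natr1.
  have kp : 0 < (k.+1)%:R :> R by rewrite ltr0n.
  rewrite ler_pdivrMr ?ltr0n // mulrAC ler_pdivlMr //.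
  move: st; rewrite e1 => st.
  move: kp st; move: ((k.+1)%:R) => b; lra.
have alb : has_lbound (range a).
  exists 0 => _ [k _ <-]; apply: divr_ge0; last exact: ler0n.
  exact: fam_ge0.
have ac : cvgn a := nonincreasing_is_cvgn anoninc alb.
exists (limn a); split; last first.
  move=> [|[|k]] nn1 n0; try by have := leq_trans n12 nn1.
  by rewrite -natr1 addrK; exact: nonincreasing_cvgn_ge anoninc ac k.
rewrite -(cvg_shiftn 2).
have -> : [sequence lambda_fam alpha F (n + 2)%N / ((n + 2)%N)%:R]_n =
    (a \* (fun n => 1 - harmonic n.+1)).
  apply: funext => n /=; rewrite /a /harmonic /= addn2.
  have cn0 : (n.+2)%:R != 0 :> R by rewrite pnatr_eq0.
  have cb : (n.+2)%:R - 1 = (n.+1)%:R :> R by rewrite -natr1 addrK.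
  rewrite -[X in X - _](divff cn0) -[X in _ - X]mul1r -mulrBl cb mulrA divfK //.
have L : (a \* (fun n => 1 - harmonic n.+1)) @ \oo --> limn a * (1 - 0).
  apply: cvgM; first exact: ac.
  apply: cvgB; first exact: cvg_cst.
  have H := @cvg_harmonic R; rewrite -(cvg_shiftn 1) in H.
  by under eq_fun do rewrite -addn1.
by rewrite subr0 mulr1 in L.
Qed.
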